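(* Let $V=[n]$, $r\ge0$, and $A,B\subseteq V$. Then $A$ and $B$ are $r$-orthogonal if and only if $$\big(|A\cap B|<r \ \vee\ A\subseteq B\ \vee\ B\subseteq A\ \vee\ |\overline{A\cup B}|<r\ \vee\ |A\cap B|=|\overline{A\cup B}|=r\big)$$ and $$\big(|A\setminus B|<r\ \vee\ A\cap B=\emptyset\ \vee\ \overline{A\cup B}=\emptyset\ \vee\ |B\setminus A|<r\ \vee\ |A\setminus B|=|B\setminus A|=r\big).$$
   Context: $\overline X=V\setminus X$. Hypergraphs on $V$ are identified with their hyperedge sets. $\mathcal K_r(n)$ is the class of hypergraphs $\mathcal E$ on $V$ satisfying: (R0) every $X\subseteq V$ with $|X|\le r$ is in $\mathcal E$; (R1) $A\in\mathcal E\Rightarrow V\setminus A\in\mathcal E$; (R2) $A,B\in\mathcal E$ and $|A\cap B|\ge r\Rightarrow A\cup B\in\mathcal E$. $\mathcal K^0_r(n)$ is the class satisfying (R0) and (R1) only. $\mathrm{cl}_r(H)$ (resp. $\mathrm{cl}^0_r(H)$) is the intersection of all hypergraphs in $\mathcal K_r(n)$ (resp. $\mathcal K^0_r(n)$) containing $H$. $A,B$ are $r$-orthogonal if $\mathrm{cl}_r(\{A,B\})=\mathrm{cl}^0_r(\{A,B\})$, where $\{A,B\}$ is the hypergraph with hyperedges $A,B$. *)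

(* Defs.v *)
From mathcomp Require Import all_boot.
Set Implicit Arguments. Unset Strict Implicit. Unset Printing Implicit Defensive.

(* Ground set V = [n] is represented by 'I_n; complement is ~: X.
   Hypergraphs on V are sets of hyperedges: {set {set 'I_n}}. *)

Definition R0 (n r : nat) (E : {set {set 'I_n}}) : bool :=
  [forall X : {set 'I_n}, (#|X| <= r) ==> (X \in E)].
Definition R1 (n : nat) (E : {set {set 'I_n}}) : bool :=
  [forall A : {set 'I_n}, (A \in E) ==> (~: A \in E)].
Definition R2 (n r : nat) (E : {set {set 'I_n}}) : bool :=
  [forall A : {set 'I_n}, forall B : {set 'I_n},
     [&& A \in E, B \in E & r <= #|A :&: B|] ==> (A :|: B \in E)].

Definition inK (n r : nat) (E : {set {set 'I_n}}) : bool :=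
  [&& R0 r E, R1 E & R2 r E].
Definition inK0 (n r : nat) (E : {set {set 'I_n}}) : bool :=
  R0 r E && R1 E.

Definition cl (n r : nat) (H : {set {set 'I_n}}) : {set {set 'I_n}} :=
  [set X | [forall E : {set {set 'I_n}}, (inK r E && (H \subset E)) ==> (X \in E)]].
Definition cl0 (n r : nat) (H : {set {set 'I_n}}) : {set {set 'I_n}} :=
  [set X | [forall E : {set {set 'I_n}}, (inK0 r E && (H \subset E)) ==> (X \in E)]].

Definition r_orthogonal (n r : nat) (A B : {set 'I_n}) : Prop :=
  cl r [set A; B] = cl0 r [set A; B].

(* Main.v *)
Require Import Defs.
From mathcomp Require Import all_boot.
Set Implicit Arguments. Unset Strict Implicit. Unset Printing Implicit Defensive.

Definition inE0 n r (A B X : {set 'I_n}) : bool :=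
  (#|X| <= r) || (#|~: X| <= r) || (X == A) || (X == ~: A) || (X == B) || (X == ~: B).

Definition c1 n r (X Y : {set 'I_n}) : Prop :=
  #|X :&: Y| < r \/ X \subset Y \/ Y \subset X \/ #|~: (X :|: Y)| < r
     \/ (#|X :&: Y| = r /\ #|~: (X :|: Y)| = r).

Lemma inE0_C n r (A B X : {set 'I_n}) : inE0 r A B (~: X) = inE0 r A B X.
Proof.
rewrite /inE0 setCK.
have e : forall Z : {set 'I_n}, (~: X == Z) = (X == ~: Z).
  by move=> Z; apply/eqP/eqP => [<-|->]; rewrite setCK.
rewrite !e !setCK.
by case: (#|X| <= r); case: (#|~: X| <= r); case: (X == A); case: (X == ~: A); case: (X == B); case: (X == ~: B).
Qed.

Lemma inE0_swapB n r (A B X : {set 'I_n}) : inE0 r A (~: B) X = inE0 r A B X.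
Proof.
rewrite /inE0 setCK.
by case: (#|X| <= r); case: (#|~: X| <= r); case: (X == A); case: (X == ~: A); case: (X == B); case: (X == ~: B).
Qed.

Lemma inE0_swap n r (A B X : {set 'I_n}) : inE0 r B A X = inE0 r A B X.
Proof.
rewrite /inE0.
by case: (#|X| <= r); case: (#|~: X| <= r); case: (X == A); case: (X == ~: A); case: (X == B); case: (X == ~: B).
Qed.

Lemma key1 n r (X Y : {set 'I_n}) : c1 r X Y -> r <= #|X :&: Y| ->
  inE0 r X Y (X :|: Y).
Proof.
rewrite /inE0 => [[h|[h|[h|[h|[h1 h2]]]]]] hr.
- by move: (leq_trans h hr); rewrite ltnn.
- by rewrite (setUidPr h) eqxx !orbT.
- by rewrite (setUidPl h) eqxx !orbT.
- by rewrite (ltnW h) orbT.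
- by rewrite h2 leqnn orbT.
Qed.

Lemma key2 n r (X Y : {set 'I_n}) : c1 r X Y -> r <= #|~: X :&: ~: Y| ->
  inE0 r X Y (~: X :|: ~: Y).
Proof.
rewrite -setCU -setCI inE0_C /inE0 => [[h|[h|[h|[h|[h1 h2]]]]]] hr.
- by rewrite (ltnW h).
- by rewrite (setIidPl h) eqxx !orbT.
- by rewrite (setIidPr h) eqxx !orbT.
- by move: (leq_trans h hr); rewrite ltnn.
- by rewrite h1 leqnn.
Qed.

Lemma card_eq_sub n (P Q : {set 'I_n}) r : P \subset Q -> #|Q| <= r -> r <= #|P| -> P = Q.
Proof.
move=> hs h1 h2; apply/eqP; rewrite eqEcard hs /=; exact: leq_trans h1 h2.
Qed.

Lemma conv n r (X Y : {set 'I_n}) :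
  (r <= #|X :&: Y| -> inE0 r X Y (X :|: Y)) ->
  (r <= #|~: X :&: ~: Y| -> inE0 r X Y (~: X :|: ~: Y)) -> c1 r X Y.
Proof.
rewrite -setCU -setCI inE0_C /c1 => h1 h2.
case: (ltnP #|X :&: Y| r) => hI; first by left.
case: (ltnP #|~: (X :|: Y)| r) => hC; first by do 3 right; left.
case: (boolP (X \subset Y)) => hXY; first by right; left.
case: (boolP (Y \subset X)) => hYX; first by do 2 right; left.
do 4 right.
have sub1 : X :&: Y = X :|: Y -> X \subset Y.
  move=> e; apply/subsetP => x xX; move/setP: (e) => /(_ x); rewrite !inE xX /=.
  by case: (x \in Y).
have C1 : #|~: (X :|: Y)| <= r.
  move: (h1 hI); rewrite /inE0 => /orP[/orP[/orP[/orP[/orP[h|h]|/eqP h]|/eqP h]|/eqP h]|/eqP h] //.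
  - by case/negP: hXY; apply: sub1; apply: card_eq_sub h hI; apply/subsetP=> x; rewrite !inE => /andP[->].
  - by case/negP: hYX; rewrite -h subsetUr.
  - case/negP: hXY; apply/subsetP => x xX; move/setP: (h) => /(_ x); rewrite !inE xX /=.
    by [].
  - by case/negP: hXY; rewrite -h subsetUl.
  - case/negP: hYX; apply/subsetP => x xY; move/setP: (h) => /(_ x); rewrite !inE xY orbT /=.
    by [].
have emp : forall Z : {set 'I_n}, X :&: Y = Z -> (forall x, x \in Z -> x \in X -> x \in Y -> false) -> #|X :&: Y| <= r.
  move=> Z e H; have -> : X :&: Y = set0.
    apply/setP => x; rewrite !inE; apply/negbTE/negP => /andP[xX xY].
    by move: (H x); rewrite -e inE xX xY => /(_ isT isT isT).
  by rewrite cards0.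
have I1 : #|X :&: Y| <= r.
  move: (h2 hC); rewrite /inE0 => /orP[/orP[/orP[/orP[/orP[h|h]|/eqP h]|/eqP h]|/eqP h]|/eqP h] //.
  - case/negP: hXY; apply: sub1.
    have e := card_eq_sub _ h hC.
    have : ~: (X :|: Y) = ~: (X :&: Y) by apply: e; rewrite setCS subIset // subsetUl.
    by move=> /(congr1 (@setC _)); rewrite !setCK.
  - by case/negP: hXY; apply/setIidPl.
  - by apply: (emp _ h) => x; rewrite inE => /negPf ->.
  - by case/negP: hYX; rewrite -h subsetIl.
  - by apply: (emp _ h) => x; rewrite inE => /negPf -> _ .
split; apply/eqP; rewrite eqn_leq; apply/andP; split => //.
Qed.

Definition E0 n r (A B : {set 'I_n}) : {set {set 'I_n}} := [set X | inE0 r A B X].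

Definition R2p n r (A B : {set 'I_n}) : Prop := forall X Y, inE0 r A B X -> inE0 r A B Y ->
  r <= #|X :&: Y| -> inE0 r A B (X :|: Y).

Lemma R2P n r (A B : {set 'I_n}) : reflect (R2p r A B) (R2 r (E0 r A B)).
Proof.
apply: (iffP forallP) => [h X Y hX hY hr | h X].
  by move: (forallP (h X) Y); rewrite !inE hX hY hr.
apply/forallP => Y; apply/implyP; rewrite !inE => /and3P[hX hY hr]; exact: h.
Qed.

Lemma c1_sym n r (X Y : {set 'I_n}) : c1 r X Y -> c1 r Y X.
Proof.
rewrite /c1 setIC setUC; tauto.
Qed.

Lemma E0_min n r (A B : {set 'I_n}) E : R0 r E -> R1 E -> A \in E -> B \in E ->
  forall X, inE0 r A B X -> X \in E.
Proof.
move=> /forallP h0 /forallP h1 hA hB X.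
have hc : forall Z, Z \in E -> ~: Z \in E by move=> Z; apply/implyP; exact: h1.
rewrite /inE0 => /orP[/orP[/orP[/orP[/orP[h|h]|/eqP ->]|/eqP ->]|/eqP ->]|/eqP ->]; auto; auto.
- exact: (implyP (h0 X)).
- by rewrite -(setCK X); apply: hc; exact: (implyP (h0 _)).
Qed.

Lemma E0_K0 n r (A B : {set 'I_n}) : inK0 r (E0 r A B) /\ [set A; B] \subset E0 r A B.
Proof.
split.
  apply/andP; split; apply/forallP => X; apply/implyP; rewrite !inE.
    by rewrite /inE0 => ->.
  by rewrite inE0_C.
apply/subsetP => X; rewrite !inE /inE0 => /orP[] /eqP ->; rewrite eqxx ?orbT // orTb.
Qed.

Lemma cl0E n r (A B : {set 'I_n}) : cl0 r [set A; B] = E0 r A B.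
Proof.
have [hK hs] := E0_K0 r A B.
apply/setP => X; rewrite !inE; apply/forallP/idP => [h | hX E].
  by move: (h (E0 r A B)); rewrite hK hs inE => /implyP /(_ isT).
apply/implyP => /andP[/andP[h0 h1] hsub].
apply: (E0_min h0 h1 _ _ hX); apply: (subsetP hsub); rewrite !inE eqxx ?orbT //.
Qed.

Lemma orthE n r (A B : {set 'I_n}) : r_orthogonal r A B <-> R2p r A B.
Proof.
rewrite /r_orthogonal cl0E.
have [hK hs] := E0_K0 r A B.
split => [e | h].
  apply/R2P; rewrite -e; apply/forallP => X; apply/forallP => Y; apply/implyP.
  move=> /and3P[]; rewrite !inE => /forallP hX /forallP hY hr.
  apply/forallP => E; apply/implyP => hE.
  move: (implyP (hX E) hE) (implyP (hY E) hE) => xE yE.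
  case/and3P: (andP hE).1 => _ _ /forallP /(_ X) /forallP /(_ Y) /implyP; apply.
  by rewrite xE yE hr.
apply/setP => X; rewrite !inE; apply/forallP/idP => [hX | hX E].
  move: (hX (E0 r A B)); rewrite inE /inK; case/andP: hK => -> ->.
  by rewrite hs /= (introT (R2P r A B) h).
apply/implyP => /andP[/and3P[h0 h1 _] hsub].
apply: (E0_min h0 h1 _ _ hX); apply: (subsetP hsub); rewrite !inE eqxx ?orbT //.
Qed.

Lemma R2pE n r (A B : {set 'I_n}) : R2p r A B <-> c1 r A B /\ c1 r A (~: B).
Proof.
have mem : forall X, [\/ X = A, X = ~: A, X = B | X = ~: B] -> inE0 r A B X.
  by move=> X [] ->; rewrite /inE0 eqxx ?orbT.
split => [h | [hAB hAB']].
  have mA : inE0 r A B A by apply/mem/Or41.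
  have mCA : inE0 r A B (~: A) by apply/mem/Or42.
  have mB : inE0 r A B B by apply/mem/Or43.
  have mCB : inE0 r A B (~: B) by apply/mem/Or44.
  split; apply: conv.
  - by move=> hr; apply: h.
  - by move=> hr; apply: h.
  - by move=> hr; rewrite inE0_swapB; apply: h.
  - by move=> hr; rewrite inE0_swapB; apply: h => //; rewrite setCK.
move=> X Y hX hY hr.
have hsmall : forall P Q : {set 'I_n}, #|P| <= r -> r <= #|P :&: Q| -> P :|: Q = Q.
  move=> P Q h1 h2; apply/setUidPr; apply/setIidPl.
  exact: card_eq_sub (subsetIl P Q) h1 h2.
have hbig : forall P Q : {set 'I_n}, #|~: P| <= r -> inE0 r A B (P :|: Q).
  move=> P Q h1; rewrite /inE0 (_ : #|~: (P :|: Q)| <= r) ?orbT ?orTb //.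
  apply: leq_trans h1; apply: subset_leq_card.
  by rewrite setCS subsetUl.
move: (hX); rewrite {1}/inE0 => /orP[/orP[/orP[/orP[/orP[hs|hb]|/eqP eX]|/eqP eX]|/eqP eX]|/eqP eX].
- by rewrite hsmall.
- exact: hbig.
all: move: (hY); rewrite {1}/inE0 => /orP[/orP[/orP[/orP[/orP[hs|hb]|/eqP eY]|/eqP eY]|/eqP eY]|/eqP eY];
  [ by rewrite setUC hsmall // setIC
  | by rewrite setUC; apply: hbig
  | subst X Y .. ].
all: first
  [ by rewrite setUid
  | by rewrite setUCr /inE0 setCT cards0 ?orbT ?orTb
  | by rewrite setUC setUCr /inE0 setCT cards0 ?orbT ?orTb
  | exact: key1 hAB hr
  | by rewrite -inE0_swap; apply: key1 (c1_sym hAB) hr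
  | exact: key2 hAB hr
  | by rewrite -inE0_swap; apply: key2 (c1_sym hAB) hr
  | by rewrite -inE0_swapB; apply: key1 hAB' hr
  | by rewrite -inE0_swapB -inE0_swap; apply: key1 (c1_sym hAB') hr
  | by move: (key2 hAB'); rewrite setCK inE0_swapB; apply
  | by rewrite setUC; move: (key2 hAB'); rewrite setCK inE0_swapB setIC; apply
  ].
Qed.

Theorem mainTheorem14 (n r : nat) (A B : {set 'I_n}) :
  r_orthogonal r A B <->
  ((#|A :&: B| < r \/ A \subset B \/ B \subset A \/ #|~: (A :|: B)| < r
     \/ (#|A :&: B| = r /\ #|~: (A :|: B)| = r))
   /\
   (#|A :\: B| < r \/ A :&: B = set0 \/ ~: (A :|: B) = set0 \/ #|B :\: A| < r
     \/ (#|A :\: B| = r /\ #|B :\: A| = r))).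
Proof.
apply: iff_trans (orthE r A B) _; apply: iff_trans (R2pE r A B) _.
rewrite /c1 -!setDE.
have -> : ~: (A :|: ~: B) = B :\: A by rewrite setCU setCK setDE setIC.
have e1 : (A \subset ~: B) <-> (A :&: B = set0).
  by rewrite subsets_disjoint setCK -setI_eq0; split => [/eqP //|->].
have e2 : (~: B \subset A) <-> (~: (A :|: B) = set0).
  by rewrite subsets_disjoint -setI_eq0 setCU setIC; split => [/eqP //|->].
tauto.
Qed.
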